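(* Let $n\ge2$, $r\ge1$, and let $V_1,\dots,V_r\in\mathrm{Mat}(n,\mathbb{C})$ satisfy $\operatorname{tr}(V_s^*V_m)=\delta_{sm}$. Define $$P_{\mathcal T}=\sum_{s=1}^r\sum_{a,b,c,d=1}^n (V_s)_{ab}(\bar V_s)_{cd}\,E^{(n)}_{ac}\otimes E^{(n)}_{bd}\in\mathrm{Mat}(n^2,\mathbb{C}),$$ $$A_{\mathcal T}=\sum_{s,m=1}^r E^{(r)}_{sm}\otimes\Big(\sum_{i=1}^r V_i\bar V_sV_m^tV_i^*\Big)\in\mathrm{Mat}(rn,\mathbb{C}).$$ Then for all integers $m\ge1$, $$\operatorname{tr}_3\big(((P_{\mathcal T})_1(P_{\mathcal T})_2)^m\big)=\operatorname{tr}\big(A_{\mathcal T}^m\big),$$ where $(P_{\mathcal T})_1=P_{\mathcal T}\otimes I_n$ and $(P_{\mathcal T})_2=I_n\otimes P_{\mathcal T}$.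
   Context: $E^{(p)}_{ab}\in\mathrm{Mat}(p,\mathbb{C})$ is the matrix unit with $(E^{(p)}_{ab})_{ij}=\delta_{ai}\delta_{bj}$; $\bar V$ is the entrywise complex conjugate, $V^t$ the transpose, $V^*$ the conjugate transpose; $\otimes$ is the Kronecker product; $\operatorname{tr}_3$ is the trace on $\mathrm{Mat}(n^3,\mathbb{C})$. (Such $P_{\mathcal T}$ is an orthogonal projection of rank $r$.) *)

(* Defs.v *)
From HB Require Import structures.
From mathcomp Require Import all_boot all_order all_algebra.
From mathcomp Require Export mxtens.
Set Implicit Arguments. Unset Strict Implicit. Unset Printing Implicit Defensive.
Import Order.TTheory GRing.Theory Num.Theory.
Local Open Scope ring_scope.

Definition conjmx (C : numClosedFieldType) m n (V : 'M[C]_(m, n)) : 'M[C]_(m, n) :=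
  map_mx (@Num.conj C) V.

Definition adjmx (C : numClosedFieldType) m n (V : 'M[C]_(m, n)) : 'M[C]_(n, m) :=
  (conjmx V)^T.

Definition P_T (C : numClosedFieldType) (n r : nat) (V : 'I_r -> 'M[C]_n)
  : 'M[C]_(n * n) :=
  \sum_(s < r) \sum_(a < n) \sum_(b < n) \sum_(c < n) \sum_(d < n)
     (V s a b * conjmx (V s) c d) *: (delta_mx a c *t delta_mx b d).

Definition A_T (C : numClosedFieldType) (n r : nat) (V : 'I_r -> 'M[C]_n)
  : 'M[C]_(r * n) :=
  \sum_(s < r) \sum_(m < r)
     (delta_mx s m *t
        (\sum_(i < r) V i *m conjmx (V s) *m (V m)^T *m adjmx (V i))).

Definition leg1 (C : numClosedFieldType) (n : nat) (P : 'M[C]_(n * n))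
  : 'M[C]_(n * n * n) := P *t (1%:M : 'M[C]_n).

Definition leg2 (C : numClosedFieldType) (n : nat) (P : 'M[C]_(n * n))
  : 'M[C]_(n * n * n) :=
  castmx (mulnA n n n, mulnA n n n) ((1%:M : 'M[C]_n) *t P).

(* Main.v *)
Require Import Defs.
From HB Require Import structures.
From mathcomp Require Import all_boot all_order all_algebra.
From mathcomp Require Import mxtens.
From mathcomp Require Import ring.
Import Order.TTheory GRing.Theory Num.Theory.
Local Open Scope ring_scope.

Notation idx := mxtens_index.
Notation unidx := mxtens_unindex.

Lemma sum_tens (R : nmodType) m n (F : 'I_(m*n) -> R) :
  \sum_k F k = \sum_(i < m) \sum_(j < n) F (idx (i, j)).
Proof.
rewrite pair_big /= (reindex (@mxtens_index m n)) /=.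
  by apply: eq_bigr => -[i j].
by exists (@mxtens_unindex m n) => k _; rewrite (mxtens_indexK, mxtens_unindexK).
Qed.

Lemma sum_delta (R : pzSemiRingType) n (i : 'I_n) (F : 'I_n -> R) :
  \sum_j (i == j)%:R * F j = F i.
Proof.
rewrite (bigD1 i) //= eqxx mul1r big1 ?addr0 // => j.
by rewrite eq_sym => /negbTE ->; rewrite mul0r.
Qed.

Lemma sum_deltar (R : pzSemiRingType) n (i : 'I_n) (F : 'I_n -> R) :
  \sum_j (j == i)%:R * F j = F i.
Proof. by under eq_bigr do rewrite eq_sym; apply: sum_delta. Qed.

Lemma mulE (R : pzRingType) p (A B : 'M[R]_p) : A * B = A *m B.
Proof. by []. Qed.

Lemma tr_pow_mulC (R : comPzRingType) p q (X : 'M[R]_(p, q)) (Y : 'M[R]_(q, p)) m :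
  (1 <= m)%N -> \tr ((X *m Y) ^+ m) = \tr ((Y *m X) ^+ m).
Proof.
case: m => // k _.
have H : forall j, (X *m Y) ^+ j.+1 = X *m (Y *m X) ^+ j *m Y.
  elim=> [|j IH]; first by rewrite expr1 expr0 mulmx1.
  by rewrite exprSr IH exprSr !mulE !mulmxA.
by rewrite H mxtrace_mulC mulmxA -mulE -exprS.
Qed.

Lemma cast3 n (a b e : 'I_n) :
  cast_ord (esym (mulnA n n n)) (idx (idx (a, b), e)) = idx (a, idx (b, e)).
Proof. by apply: val_inj => /=; rewrite mulnDl -mulnA addnA. Qed.

Lemma adjmx_mul (C : numClosedFieldType) p q k (X : 'M[C]_(p, q)) (Y : 'M[C]_(q, k)) :
  adjmx (X *m Y) = adjmx Y *m adjmx X.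
Proof.
apply/matrixP => i j; rewrite !mxE rmorph_sum; apply: eq_bigr => l _.
by rewrite !mxE rmorphM mulrC.
Qed.

Lemma adjmxK (C : numClosedFieldType) p q (X : 'M[C]_(p, q)) : adjmx (adjmx X) = X.
Proof. by apply/matrixP => i j; rewrite !mxE conjCK. Qed.

Section S.
Variables (C : numClosedFieldType) (n r : nat) (V : 'I_r -> 'M[C]_n).

Lemma PE a b c d : P_T V (idx (a, b)) (idx (c, d)) = \sum_s V s a b * (V s c d)^*.
Proof.
rewrite summxE; apply: eq_bigr => s _.
transitivity (\sum_(a' < n) (a == a')%:R * \sum_(b' < n) (b == b')%:R *
  \sum_(c' < n) (c == c')%:R * \sum_(d' < n) (d == d')%:R *
     (V s a' b' * (V s c' d')^*)).
  do 4 (rewrite summxE; apply: eq_bigr => ? _; rewrite ?mulr_sumr).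
  rewrite !mxE !mxtens_indexK /=.
  by case: eqP; case: eqP; case: eqP; case: eqP => /= *; ring.
by rewrite sum_delta sum_delta sum_delta sum_delta.
Qed.

Definition Bm : 'M[C]_(n * n * n, r * n) := \matrix_(i, j)
  (V (unidx j).1 (unidx (unidx i).1).1 (unidx (unidx i).1).2 *
   ((unidx i).2 == (unidx j).2)%:R).

Definition Cm : 'M[C]_(n * n * n, r * n) := \matrix_(i, j)
  (((unidx (unidx i).1).1 == (unidx j).2)%:R *
   V (unidx j).1 (unidx (unidx i).1).2 (unidx i).2).

Lemma BE a b e s g : Bm (idx (idx (a, b), e)) (idx (s, g)) = V s a b * (e == g)%:R.
Proof. by rewrite mxE !mxtens_indexK. Qed.

Lemma CE a b e s g : Cm (idx (idx (a, b), e)) (idx (s, g)) = (a == g)%:R * V s b e.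
Proof. by rewrite mxE !mxtens_indexK. Qed.

Lemma adjE p q (X : 'M[C]_(p, q)) i j : adjmx X i j = (X j i)^*.
Proof. by rewrite !mxE. Qed.

Lemma leg1E : leg1 (P_T V) = Bm *m adjmx Bm.
Proof.
apply/matrixP => i j.
case: (mxtens_indexP i) => ab e; case: (mxtens_indexP ab) => a b.
case: (mxtens_indexP j) => cd f; case: (mxtens_indexP cd) => c d.
rewrite /leg1 tensmxE PE [X in _ * X]mxE [RHS]mxE sum_tens mulr_suml; apply: eq_bigr => s _.
transitivity (\sum_(g < n) (e == g)%:R * (V s a b * (V s c d)^* * (f == g)%:R)).
  by rewrite sum_delta eq_sym.
by apply: eq_bigr => g _; rewrite adjE !BE rmorphM /= conjC_nat; ring.
Qed.

Lemma leg2E : leg2 (P_T V) = Cm *m adjmx Cm.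
Proof.
apply/matrixP => i j.
case: (mxtens_indexP i) => ab e; case: (mxtens_indexP ab) => a b.
case: (mxtens_indexP j) => cd f; case: (mxtens_indexP cd) => c d.
rewrite /leg2 castmxE /= !cast3 tensmxE PE [X in X * _]mxE [RHS]mxE sum_tens mulr_sumr; apply: eq_bigr => s _.
transitivity (\sum_(g < n) (a == g)%:R * ((c == g)%:R * (V s b e * (V s d f)^*))).
  by rewrite sum_delta eq_sym.
by apply: eq_bigr => g _; rewrite adjE !CE rmorphM /= conjC_nat; ring.
Qed.

Definition Km := adjmx Bm *m Cm.

Lemma KE s e t f : Km (idx (s, e)) (idx (t, f)) = \sum_b (V s f b)^* * V t b e.
Proof.
rewrite mxE sum_tens sum_tens.
transitivity (\sum_(a < n) (a == f)%:R * \sum_(b < n) \sum_(g < n) (g == e)%:R *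
   ((V s a b)^* * V t b g)).
  apply: eq_bigr => a _; rewrite mulr_sumr; apply: eq_bigr => b _.
  rewrite mulr_sumr; apply: eq_bigr => g _.
  by rewrite adjE BE CE rmorphM /= conjC_nat; ring.
rewrite sum_deltar; apply: eq_bigr => b _; by rewrite sum_deltar.
Qed.


Lemma ATE (s : 'I_r) (e : 'I_n) (m : 'I_r) (f : 'I_n) : A_T V (idx (s, e)) (idx (m, f)) =
  (\sum_(i < r) V i *m Defs.conjmx (V s) *m (V m)^T *m adjmx (V i)) e f.
Proof.
rewrite summxE.
transitivity (\sum_(s' < r) (s == s')%:R * \sum_(m' < r) (m == m')%:R *
  (\sum_(i < r) V i *m Defs.conjmx (V s') *m (V m')^T *m adjmx (V i)) e f).
  apply: eq_bigr => s' _; rewrite summxE mulr_sumr; apply: eq_bigr => m' _.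
  rewrite tensmxE mxE.
  by case: eqP; case: eqP => /= *; ring.
by rewrite sum_delta sum_delta.
Qed.

Lemma A_TE : A_T V = adjmx Km *m Km.
Proof.
apply/matrixP => i j.
case: (mxtens_indexP i) => s e; case: (mxtens_indexP j) => m f.
rewrite ATE summxE mxE sum_tens; apply: eq_bigr => t _.
rewrite mxE.
under [RHS]eq_bigr => g _ do rewrite adjE !KE rmorph_sum.
under [RHS]eq_bigr => g _ do under eq_bigr => b _ do rewrite rmorphM /= conjCK.
rewrite [LHS](eq_bigr (fun z => \sum_y (\sum_x V t e x * (V s x y)^*) * V m z y * (V t f z)^*)); last first.
  move=> z _; rewrite !mxE mulr_suml; apply: eq_bigr => y _; rewrite !mxE.
  by congr (_ * _ * _); apply: eq_bigr => x _; rewrite /Defs.conjmx mxE.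
rewrite exchange_big; apply: eq_bigr => g _.
rewrite mulr_sumr; apply: eq_bigr => z _; ring.
Qed.

End S.

Theorem lemma5 (C : numClosedFieldType) (n r : nat) (V : 'I_r -> 'M[C]_n) :
  (2 <= n)%N -> (1 <= r)%N ->
  (forall s m : 'I_r, \tr (adjmx (V s) *m V m) = (s == m)%:R) ->
  forall m : nat, (1 <= m)%N ->
    \tr ((leg1 (P_T V) *m leg2 (P_T V)) ^+ m) = \tr ((A_T V) ^+ m).
Proof.
move=> _ _ _ m hm.
rewrite leg1E leg2E A_TE /Km adjmx_mul adjmxK.
set B := Bm C n r V; set Cc := Cm C n r V.
have -> : B *m adjmx B *m (Cc *m adjmx Cc) = B *m (adjmx B *m Cc *m adjmx Cc)
  by rewrite !mulmxA.
rewrite tr_pow_mulC //.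
have -> : adjmx B *m Cc *m adjmx Cc *m B = (adjmx B *m Cc) *m (adjmx Cc *m B)
  by rewrite !mulmxA.
by rewrite tr_pow_mulC.
Qed.
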